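(* Let $X$ be a proper, path connected metric space, let $S$ be a discrete subset of $X$, and let $x_0\in S$. Then $$\bigcup_{1\le i\le \#(S)} B_i(x_0)=X \qquad\text{and}\qquad b_i(x_0)\cap b_j(x_0)=\emptyset\ \text{ whenever } i\ne j.$$
   Context: $(X,d)$ is a metric space. It is proper if for every $x\in X$ the function $d(x,\cdot)$ is a proper map (in particular every closed ball is compact). A subset $S\subseteq X$ is discrete if every compact subset of $X$ contains only finitely many points of $S$. For $x\in X$ and $r>0$ write $N_r(x)=\{y\in X: d(x,y)<r\}$ and $C_r(x)=\{y\in X: d(x,y)=r\}$; $\#(\cdot)$ denotes cardinality. For $x_0\in S$, a positive integer $n\le\#(S)$, and $x\in X$ with $r=d(x,x_0)$, define: $x\in b_n(x_0)$ iff $\#(N_r(x)\cap S)=n-1$ and $C_r(x)\cap S=\{x_0\}$; and $x\in B_n(x_0)$ iff $\#(N_r(x)\cap S)=m$ and $\#(C_r(x)\cap S)=\ell$ for some integers $m\ge 0$, $\ell\ge 1$ with $m+1\le n\le m+\ell$. *)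

(* Defs.v *)
From HB Require Import structures.
From mathcomp Require Import all_boot all_order all_algebra.
From mathcomp Require Import all_classical all_reals all_analysis.
Set Implicit Arguments. Unset Strict Implicit. Unset Printing Implicit Defensive.
Import Order.TTheory GRing.Theory Num.Theory numFieldTopology.Exports.
Local Open Scope classical_set_scope.
Local Open Scope ring_scope.

Section Defs.
Context {R : realType} {X : metricType R}.

Definition Nball (x : X) (r : R) : set X := [set y | mdist x y < r].
Definition Csphere (x : X) (r : R) : set X := [set y | mdist x y = r].

Definition proper_metric : Prop :=
  forall (x : X) (K : set R), compact K -> compact (mdist x @^-1` K).

Definition path_connected : Prop :=
  forall x y : X, exists f : R -> X,
    {within `[0, 1], continuous f} /\ f 0 = x /\ f 1 = y.

Definition discrete_subset (S : set X) : Prop :=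
  forall K : set X, compact K -> finite_set (K `&` S).

Definition small_b (S : set X) (x0 : X) (n : nat) (x : X) : Prop :=
  let r := mdist x x0 in
  (Nball x r `&` S #= `I_(n.-1))%card /\ Csphere x r `&` S = [set x0].

Definition big_B (S : set X) (x0 : X) (n : nat) (x : X) : Prop :=
  let r := mdist x x0 in
  exists m l : nat, (1 <= l)%N /\
    (Nball x r `&` S #= `I_m)%card /\ (Csphere x r `&` S #= `I_l)%card /\
    (m.+1 <= n)%N /\ (n <= m + l)%N.

End Defs.

(* Main.v *)
Require Import Defs.
From HB Require Import structures.
From mathcomp Require Import all_boot all_order all_algebra.
From mathcomp Require Import all_classical all_reals all_analysis.
From mathcomp Require Import finmap.
Local Open Scope classical_set_scope.
Local Open Scope ring_scope.
Import Order.TTheory GRing.Theory Num.Theory.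

(* "1 <= i <= #(S)" is rendered as (1 <= i)%N /\ (`I_i #<= S) *)
Theorem mainTheorem2 (R : realType) (X : metricType R) (S : set X) (x0 : X) :
  @proper_metric R X -> @path_connected R X -> discrete_subset S -> S x0 ->
  (\bigcup_(i in [set i : nat | (1 <= i)%N /\ (`I_i #<= S)%card])
      big_B S x0 i = [set: X]) /\
  (forall i j : nat,
      (1 <= i)%N -> (`I_i #<= S)%card -> (1 <= j)%N -> (`I_j #<= S)%card ->
      i <> j -> small_b S x0 i `&` small_b S x0 j = set0).
Proof.
move=> Hprop _ Hdisc Sx0; split; last first.
  move=> i j i1 _ j1 _ ij; apply/seteqP; split => // x [[Hi _] [Hj _]].
  have := card_eq_trans (card_esym Hi) Hj => /card_eq_II eij.
  by apply: ij; rewrite -(prednK i1) -(prednK j1) eij.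
apply/seteqP; split => // x _.
set r := mdist x x0.
have r0 : 0 <= r by apply: mdist_ge0.
have cK : compact (mdist x @^-1` `[0, r]) by apply: Hprop; apply: segment_compact.
have fK := Hdisc _ cK.
set A := Nball x r `&` S.
set B := Csphere x r `&` S.
have fA : finite_set A.
  apply: sub_finite_set fK => y [/= Hy Sy]; split => //.
  by rewrite /= in_itv /= mdist_ge0 ltW.
have fB : finite_set B.
  apply: sub_finite_set fK => y [/= Hy Sy]; split => //.
  by rewrite /= in_itv /= mdist_ge0 Hy lexx.
have /finite_setP [m Am] := fA.
have /finite_setP [l Bl] := fB.
have l1 : (1 <= l)%N.
  have h1 : (`I_1 #<= [set x0])%card.
    by move: (card_esym (card_set1 (x:=x0))); rewrite card_eq_le => /andP[].
  have h2 : (B #<= `I_l)%card by move: Bl; rewrite card_eq_le => /andP[].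
  have h3 : ([set x0] #<= B)%card by apply: subset_card_le => y /= ->; split.
  by rewrite -card_le_II; apply: card_le_trans h2; apply: card_le_trans h3.
have AB0 : A `&` B = set0.
  apply/seteqP; split => // y [[/= H1 _] [/= H2 _]].
  rewrite /Csphere /= in H2; move: H1; rewrite /Nball /= H2 ltxx.
  by [].
have fU : finite_set (A `|` B) by rewrite finite_setU; split.
have cU : #|` fset_set (A `|` B)| = (m + l)%N.
  rewrite fset_setU // cardfsU -fset_setI // AB0 fset_set0 cardfs0 subn0.
  by rewrite (card_fset_set Am) (card_fset_set Bl).
exists m.+1.
  split => //.
  have g1 : (`I_m.+1 #<= `I_(m + l))%card.
    by rewrite card_le_II -addn1 leq_add2l.
  have g2 : (`I_(m + l) #<= A `|` B)%card.
    move/card_eq_fsetP: cU; rewrite fset_setK // => H.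
    by move: (card_esym H); rewrite card_eq_le => /andP[].
  have g3 : (A `|` B #<= S)%card.
    by apply: subset_card_le => y [[]|[]].
  exact: card_le_trans g1 (card_le_trans g2 g3).
exists m, l; do 4 (split => //).
by rewrite -[(m.+1)%N]addn1 leq_add2l.
Qed.
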